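(* Let $\eta,\Sigma,\theta > 0$ and let $\tau \colon \mathbb{R}^{2} \to \mathbb{R}$ satisfy: ($\tau_{1}$) for every $t \in \mathbb{R}$, $y \mapsto \tau(y,t)$ is $C^{1,1}$ and $|\dot{\tau}(y_{2},t) - \dot{\tau}(y_{1},t)| \leq 2\Sigma|y_{2}-y_{1}|$ for all $y_{1},y_{2}$; ($\tau_{2}$) $\theta|t_{2}-t_{1}| \leq |\tau(y,t_{2}) - \tau(y,t_{1})| \leq \theta^{-1}|t_{2}-t_{1}|$ for all $t_{1},t_{2},y \in \mathbb{R}$; ($\tau_{3}$) $|\dot{\tau}(y,t_{2}) - \dot{\tau}(y,t_{1})| \leq \eta\sqrt{|t_{2}-t_{1}|}$ for all $y,t_{1},t_{2} \in \mathbb{R}$, where $\dot{\tau} = \partial_{y}\tau$. Define $\phi \colon \mathbb{W} \to \mathbb{L}$ by $\phi(0,y,\tau(y,t)) := (\dot{\tau}(y,t),0,0)$, let $\Gamma := \{w \cdot \phi(w) : w \in \mathbb{W}\}$, and $\Psi(y,t) := (0,y,\tau(y,t)) \cdot (\dot{\tau}(y,t),0,0)$. Then $\phi$ is an intrinsic Lipschitz function (i.e. $\Gamma$ is an intrinsic $L$-Lipschitz graph over $\mathbb{W}$), and $\Psi$ is a bilipschitz homeomorphism $(\mathbb{W},d_{\mathrm{par}}) \to (\Gamma,d)$; the intrinsic Lipschitz constant $L$ and the bilipschitz constant depend only on $\eta,\Sigma,\theta$.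
   Context: $\mathbb{H}$ is $\mathbb{R}^{3}$ with group law $(x_{1},y_{1},t_{1}) \cdot (x_{2},y_{2},t_{2}) = (x_{1}+x_{2},y_{1}+y_{2},t_{1}+t_{2}+\tfrac{1}{2}(x_{1}y_{2}-x_{2}y_{1}))$ and metric $d(p,q) = \|q^{-1}\cdot p\|$ with $\|(x,y,t)\| = \max\{\sqrt{x^{2}+y^{2}},\sqrt{|t|}\}$. $\mathbb{W} = \{(0,y,t)\} \subset \mathbb{H}$, identified with $\mathbb{R}^{2}$ with metric $d_{\mathrm{par}}((y,t),(\xi,\tau)) = \max\{|y-\xi|,|t-\tau|^{1/2}\}$, and $\mathbb{L} = \{(x,0,0)\}$. Every $p \in \mathbb{H}$ splits uniquely as $p = w \cdot v$ with $w \in \mathbb{W}$, $v \in \mathbb{L}$; $\Pi_{\mathbb{W}}(p) := w = (0,y,t+\tfrac{1}{2}xy)$ and $\Pi_{\mathbb{L}}(p) := v = (x,0,0)$ for $p = (x,y,t)$. A set $\Gamma$ is an intrinsic $L$-Lipschitz graph over $\mathbb{W}$ if $\Pi_{\mathbb{W}}|_{\Gamma}$ is a bijection onto $\mathbb{W}$ and $\|\Pi_{\mathbb{L}}(q^{-1}\cdot p)\| \leq L\|\Pi_{\mathbb{W}}(q^{-1}\cdot p)\|$ for all $p,q \in \Gamma$. By ($\tau_{2}$), for each $y$ the map $t \mapsto \tau(y,t)$ is a bijection of $\mathbb{R}$, so $\phi$ is well defined on all of $\mathbb{W}$. *)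

(* Defs.v *)
From Stdlib Require Import Reals Lra.
Open Scope R_scope.

(* Points of the Heisenberg group H = R^3, written (x, y, t). *)
Definition Hpt : Type := (R * R * R)%type.

Definition hx (p : Hpt) : R := fst (fst p).
Definition hy (p : Hpt) : R := snd (fst p).
Definition ht (p : Hpt) : R := snd p.

Definition hmul (p q : Hpt) : Hpt :=
  (hx p + hx q, hy p + hy q,
   ht p + ht q + / 2 * (hx p * hy q - hx q * hy p)).

Definition hinv (p : Hpt) : Hpt := (- hx p, - hy p, - ht p).

Definition hnorm (p : Hpt) : R :=
  Rmax (sqrt (hx p ^ 2 + hy p ^ 2)) (sqrt (Rabs (ht p))).

Definition hdist (p q : Hpt) : R := hnorm (hmul (hinv q) p).

Definition inW (p : Hpt) : Prop := hx p = 0.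
Definition inL (p : Hpt) : Prop := hy p = 0 /\ ht p = 0.

(* projections: p = Pi_W(p) . Pi_L(p) *)
Definition PiW (p : Hpt) : Hpt := (0, hy p, ht p + / 2 * hx p * hy p).
Definition PiL (p : Hpt) : Hpt := (hx p, 0, 0).

(* parabolic distance on W identified with R^2 *)
Definition dpar (a b : R * R) : R :=
  Rmax (Rabs (fst a - fst b)) (sqrt (Rabs (snd a - snd b))).

Definition intrinsic_Lipschitz_graph (Gam : Hpt -> Prop) (L : R) : Prop :=
  (* Pi_W restricted to Gam is a bijection onto W *)
  (forall p, Gam p -> inW (PiW p)) /\
  (forall w, inW w -> exists p, Gam p /\ PiW p = w) /\
  (forall p q, Gam p -> Gam q -> PiW p = PiW q -> p = q) /\
  (forall p q, Gam p -> Gam q ->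
     hnorm (PiL (hmul (hinv q) p)) <= L * hnorm (PiW (hmul (hinv q) p))).

(* Graph relation of phi : W -> L, phi(0,y,tau(y,t)) := (taud(y,t),0,0):
   phi_rel tau taud w v  means  v = phi(w). *)
Definition phi_rel (tau taud : R -> R -> R) (w v : Hpt) : Prop :=
  inW w /\ exists t, tau (hy w) t = ht w /\ v = (taud (hy w) t, 0, 0).

Definition Gamma (tau taud : R -> R -> R) (p : Hpt) : Prop :=
  exists w v, phi_rel tau taud w v /\ p = hmul w v.

Definition Psi (tau taud : R -> R -> R) (a : R * R) : Hpt :=
  hmul (0, fst a, tau (fst a) (snd a)) (taud (fst a) (snd a), 0, 0).

(* Main.v *)
Require Import Defs.
From Stdlib Require Import Reals Lra.
Open Scope R_scope.

Lemma lip_cont (f : R -> R) (K : R) : 0 < K ->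
  (forall a b, Rabs (f b - f a) <= K * Rabs (b - a)) -> continuity f.
Proof.
  intros HK Hf x. unfold continuity_pt, continue_in, limit1_in, limit_in.
  intros eps Heps. exists (eps / K). split.
  - apply Rdiv_lt_0_compat; lra.
  - intros z [_ Hz]. simpl in *. unfold R_dist in *.
    pose proof (Hf x z).
    apply Rle_lt_trans with (K * Rabs (z - x)); [lra|].
    apply Rmult_lt_reg_l with (/K). apply Rinv_0_lt_compat; lra.
    rewrite <- Rmult_assoc, Rinv_l by lra. unfold Rdiv in Hz. lra.
Qed.

Lemma surj_aux (f : R -> R) (th : R) : 0 < th ->
  (forall a b, th * Rabs (b - a) <= Rabs (f b - f a) /\
               Rabs (f b - f a) <= / th * Rabs (b - a)) ->
  forall s, exists t, f t = s.
Proof.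
  intros Hth Hf s.
  assert (Hc : forall v, continuity (fun t => f t - v)).
  { intro v. apply (lip_cont _ (/ th)). apply Rinv_0_lt_compat; lra.
    intros a b. replace (f b - v - (f a - v)) with (f b - f a) by ring.
    apply Hf. }
  assert (Hivt : forall v a b, a <= b -> (f a - v) * (f b - v) <= 0 ->
           exists t, a <= t <= b /\ f t = v).
  { intros v a b Hab Hp. destruct (IVT_cor _ a b (Hc v) Hab Hp) as [z [Hz1 Hz2]].
    exists z. split; [exact Hz1| lra]. }
  set (f0 := f 0).
  set (R0 := Rabs (s - f0) / th + 1).
  assert (HR0 : 0 < R0).
  { unfold R0. pose proof (Rabs_pos (s - f0)).
    assert (0 <= Rabs (s - f0) / th) by (unfold Rdiv; apply Rmult_le_pos; [lra| left; apply Rinv_0_lt_compat; lra]). lra. }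
  set (A := f (- R0)). set (B := f R0).
  assert (HA : th * R0 <= Rabs (A - f0)).
  { destruct (Hf 0 (-R0)) as [H1 _]. unfold A, f0.
    replace (- R0 - 0) with (- R0) in H1 by ring. rewrite Rabs_Ropp, Rabs_right in H1 by lra. exact H1. }
  assert (HB : th * R0 <= Rabs (B - f0)).
  { destruct (Hf 0 R0) as [H1 _]. unfold B, f0.
    replace (R0 - 0) with R0 in H1 by ring. rewrite Rabs_right in H1 by lra. exact H1. }
  assert (Hs : Rabs (s - f0) < th * R0).
  { unfold R0. replace (th * (Rabs (s - f0) / th + 1)) with (Rabs (s - f0) + th) by (field; lra). lra. }
  destruct (Rle_dec ((A - s) * (B - s)) 0) as [Hab|Hab].
  { destruct (Hivt s (-R0) R0) as [t [_ Ht]]; [lra|exact Hab|]. now exists t. }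
  destruct (Rle_dec ((A - s) * (f0 - s)) 0) as [Ha0|Ha0].
  { destruct (Hivt s (-R0) 0) as [t [_ Ht]]; [lra|exact Ha0|]. now exists t. }
  exfalso.
  assert (Hsame : (A - f0) * (B - f0) > 0).
  { revert HA HB Hs Hab Ha0. unfold Rabs; repeat destruct Rcase_abs; intros; nra. }
  assert (Hinj : forall t1 t2, f t1 = f t2 -> t1 = t2).
  { intros t1 t2 He. destruct (Hf t1 t2) as [H1 _]. rewrite He in H1.
    replace (f t2 - f t2) with 0 in H1 by ring. rewrite Rabs_R0 in H1.
    pose proof (Rabs_pos (t2 - t1)).
    assert (Rabs (t2 - t1) = 0) by nra.
    destruct (Req_dec t1 t2) as [|Hn]; [auto|]. exfalso.
    assert (t2 - t1 <> 0) by lra. apply Rabs_no_R0 in H2. contradiction. }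
  assert (Hv : exists v, (A - v) * (f0 - v) < 0 /\ (f0 - v) * (B - v) < 0).
  { destruct (Rlt_dec f0 A).
    - assert (f0 < B) by nra.
      exists ((f0 + Rmin A B) / 2). unfold Rmin; destruct Rle_dec; split; nra.
    - assert (A < f0) by (destruct (Req_dec A f0); [subst; nra|lra]).
      assert (B < f0) by nra.
      exists ((f0 + Rmax A B) / 2). unfold Rmax; destruct Rle_dec; split; nra. }
  destruct Hv as [v [Hv1 Hv2]].
  destruct (Hivt v (-R0) 0) as [t1 [Ht1 Ht1']]; [lra|unfold A, f0 in Hv1; lra|].
  destruct (Hivt v 0 R0) as [t2 [Ht2 Ht2']]; [lra|unfold B, f0 in Hv2; lra|].
  assert (t1 = t2) by (apply Hinj; congruence).
  assert (Hz : t2 = 0) by lra. rewrite Hz in Ht2'. unfold f0 in Hv1. rewrite Ht2' in Hv1. nra.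
Qed.

Lemma taylor (u u' : R -> R) (K : R) : 0 <= K ->
  (forall y, derivable_pt_lim u y (u' y)) ->
  (forall y1 y2, Rabs (u' y2 - u' y1) <= K * Rabs (y2 - y1)) ->
  forall y1 y2, Rabs (u y1 - u y2 - u' y2 * (y1 - y2)) <= K * (y1 - y2) ^ 2.
Proof.
  intros HK Hd Hl y1 y2.
  destruct (Rtotal_order y1 y2) as [H|[H|H]].
  - destruct (MVT_cor2 u u' y1 y2 H (fun c _ => Hd c)) as [c [Hc Hc2]].
    replace (u y1 - u y2 - u' y2 * (y1 - y2)) with ((u' y2 - u' c) * (y2 - y1)) by lra.
    rewrite Rabs_mult. pose proof (Hl c y2).
    rewrite (Rabs_right (y2 - y1)) by lra. rewrite (Rabs_right (y2 - c)) in H0 by lra.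
    assert (0 <= K * (c - y1)) by nra.
    apply Rle_trans with (K * (y2 - c) * (y2 - y1)). apply Rmult_le_compat_r; lra. nra.
  - subst. replace (u y2 - u y2 - u' y2 * (y2 - y2)) with 0 by ring. rewrite Rabs_R0. nra.
  - destruct (MVT_cor2 u u' y2 y1 H (fun c _ => Hd c)) as [c [Hc Hc2]].
    replace (u y1 - u y2 - u' y2 * (y1 - y2)) with ((u' c - u' y2) * (y1 - y2)) by lra.
    rewrite Rabs_mult. pose proof (Hl y2 c).
    rewrite (Rabs_right (y1 - y2)) by lra. rewrite (Rabs_right (c - y2)) in H0 by lra.
    assert (0 <= K * (y1 - c)) by nra.
    apply Rle_trans with (K * (c - y2) * (y1 - y2)). apply Rmult_le_compat_r; lra. nra.
Qed.

Lemma abs_sq (x M : R) : Rabs x <= M -> x ^ 2 <= M ^ 2.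
Proof. intros H. rewrite <- pow2_abs. pose proof (Rabs_pos x). nra. Qed.

Lemma sqrt_bound (X c N : R) : 0 <= c -> 0 <= N -> X <= c * N ^ 2 -> sqrt X <= sqrt c * N.
Proof.
  intros Hc HN H. apply Rle_trans with (sqrt (c * N ^ 2)).
  - now apply sqrt_le_1_alt.
  - rewrite sqrt_mult_alt by exact Hc. rewrite sqrt_pow2 by exact HN. lra.
Qed.

Lemma sqrt_le_M (X M : R) : 0 <= M -> X <= M ^ 2 -> sqrt X <= M.
Proof.
  intros HM H. apply Rle_trans with (sqrt (M ^ 2)).
  - now apply sqrt_le_1_alt.
  - rewrite sqrt_pow2 by exact HM. lra.
Qed.

Lemma sqrt_abs_sq (X : R) : Rabs X <= (sqrt (Rabs X)) ^ 2.
Proof. simpl. rewrite Rmult_1_r, sqrt_sqrt by apply Rabs_pos. lra. Qed.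

Lemma abs_le_sqrt (x y : R) : Rabs x <= sqrt (x ^ 2 + y ^ 2).
Proof.
  rewrite <- (sqrt_pow2 (Rabs x)) by apply Rabs_pos. apply sqrt_le_1_alt. rewrite pow2_abs. nra.
Qed.

Lemma div_le (th X Y : R) : 0 < th -> th * X <= Y -> X <= Y / th.
Proof.
  intros Hth H. apply Rmult_le_reg_l with th; [lra|].
  replace (th * (Y / th)) with Y by (field; lra). lra.
Qed.

Lemma sq_mono (a b : R) : 0 <= a -> a <= b -> a ^ 2 <= b ^ 2.
Proof. intros; nra. Qed.

Lemma hnorm_lower p : 0 <= hnorm p /\ Rabs (hx p) <= hnorm p /\ Rabs (hy p) <= hnorm p
  /\ Rabs (ht p) <= hnorm p ^ 2.
Proof.
  unfold hnorm. pose proof (Rmax_l (sqrt (hx p ^ 2 + hy p ^ 2)) (sqrt (Rabs (ht p)))).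
  pose proof (Rmax_r (sqrt (hx p ^ 2 + hy p ^ 2)) (sqrt (Rabs (ht p)))).
  pose proof (sqrt_pos (Rabs (ht p))).
  pose proof (abs_le_sqrt (hx p) (hy p)).
  pose proof (abs_le_sqrt (hy p) (hx p)). rewrite Rplus_comm in H3.
  pose proof (sqrt_abs_sq (ht p)).
  pose proof (sq_mono _ _ H1 H0).
  repeat split; lra.
Qed.

Lemma hnorm_upper p M : 0 <= M -> hx p ^ 2 + hy p ^ 2 <= M ^ 2 -> Rabs (ht p) <= M ^ 2 ->
  hnorm p <= M.
Proof. intros. unfold hnorm. apply Rmax_lub; apply sqrt_le_M; auto. Qed.

Lemma dpar_lower y1 t1 y2 t2 : 0 <= dpar (y1, t1) (y2, t2) /\
  Rabs (y1 - y2) <= dpar (y1, t1) (y2, t2) /\ sqrt (Rabs (t1 - t2)) <= dpar (y1, t1) (y2, t2)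
  /\ Rabs (t1 - t2) <= dpar (y1, t1) (y2, t2) ^ 2.
Proof.
  unfold dpar; simpl.
  pose proof (Rmax_l (Rabs (y1 - y2)) (sqrt (Rabs (t1 - t2)))).
  pose proof (Rmax_r (Rabs (y1 - y2)) (sqrt (Rabs (t1 - t2)))).
  pose proof (sqrt_pos (Rabs (t1 - t2))).
  pose proof (sqrt_abs_sq (t1 - t2)).
  pose proof (sq_mono _ _ H1 H0).
  repeat split; lra.
Qed.

Lemma dpar_upper y1 t1 y2 t2 M : 0 <= M -> Rabs (y1 - y2) <= M -> Rabs (t1 - t2) <= M ^ 2 ->
  dpar (y1, t1) (y2, t2) <= M.
Proof. intros. unfold dpar; simpl. apply Rmax_lub; auto. apply sqrt_le_M; auto. Qed.

Lemma z_comp tau taud y1 t1 y2 t2 :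
  let z := hmul (hinv (Psi tau taud (y2, t2))) (Psi tau taud (y1, t1)) in
  hx z = taud y1 t1 - taud y2 t2 /\ hy z = y1 - y2 /\
  ht z = (tau y1 t1 - tau y2 t2 - taud y2 t2 * (y1 - y2))
         - / 2 * (taud y1 t1 - taud y2 t2) * (y1 - y2).
Proof. unfold Psi, hmul, hinv, hx, hy, ht; simpl. repeat split; field. Qed.

Lemma PiW_Psi tau taud y t : PiW (Psi tau taud (y, t)) = (0, y, tau y t).
Proof. unfold PiW, Psi, hmul, hx, hy, ht; simpl. f_equal; [f_equal; ring | field]. Qed.

Lemma abs_half x u v : Rabs (x - / 2 * u * v) <= Rabs x + / 2 * (Rabs u * Rabs v)
  /\ Rabs (x + / 2 * u * v) <= Rabs x + / 2 * (Rabs u * Rabs v).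
Proof.
  rewrite <- Rabs_mult. 
  assert (Rabs (/2 * u * v) = / 2 * Rabs (u * v)).
  { rewrite Rmult_assoc, Rabs_mult, Rabs_right; [ring|lra]. }
  split.
  - unfold Rminus. eapply Rle_trans; [apply Rabs_triang|]. rewrite Rabs_Ropp. lra.
  - eapply Rle_trans; [apply Rabs_triang|]. lra.
Qed.

Lemma Gamma_Psi tau taud a : Gamma tau taud (Psi tau taud a).
Proof.
  destruct a as [y t]. exists (0, y, tau y t), (taud y t, 0, 0). split; [|reflexivity].
  split; [reflexivity|]. exists t. split; reflexivity.
Qed.

Lemma Gamma_inv tau taud p : Gamma tau taud p -> exists a, p = Psi tau taud a.
Proof.
  intros [w [v [[Hw [t [Ht Hv]]] Hp]]]. exists (hy w, t). subst p v.
  destruct w as [[x y] s]. unfold inW, hx, hy, ht in *; simpl in *. subst. reflexivity.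
Qed.

Lemma core eta Sigma theta tau taud : 0 < eta -> 0 < Sigma -> 0 < theta ->
    (forall y t, derivable_pt_lim (fun z => tau z t) y (taud y t)) ->
    (forall t y1 y2, Rabs (taud y2 t - taud y1 t) <= 2 * Sigma * Rabs (y2 - y1)) ->
    (forall y t1 t2, theta * Rabs (t2 - t1) <= Rabs (tau y t2 - tau y t1) /\
                     Rabs (tau y t2 - tau y t1) <= / theta * Rabs (t2 - t1)) ->
    (forall y t1 t2, Rabs (taud y t2 - taud y t1) <= eta * sqrt (Rabs (t2 - t1))) ->
  forall y1 t1 y2 t2,
  Rabs (taud y1 t1 - taud y2 t2) <= 2 * Sigma * Rabs (y1 - y2) + eta * sqrt (Rabs (t1 - t2)) /\
  theta * Rabs (t1 - t2) <= Rabs (tau y1 t1 - tau y2 t2 - taud y2 t2 * (y1 - y2))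
                             + 2 * Sigma * (y1 - y2) ^ 2 /\
  Rabs (tau y1 t1 - tau y2 t2 - taud y2 t2 * (y1 - y2))
     <= / theta * Rabs (t1 - t2) + 2 * Sigma * (y1 - y2) ^ 2.
Proof.
  intros He HS Hth Hd Hl H2 H3 y1 t1 y2 t2.
  split.
  - replace (taud y1 t1 - taud y2 t2) with
      ((taud y1 t1 - taud y1 t2) + (taud y1 t2 - taud y2 t2)) by ring.
    eapply Rle_trans; [apply Rabs_triang|].
    pose proof (H3 y1 t2 t1). pose proof (Hl t2 y2 y1). lra.
  - pose proof (taylor (fun z => tau z t2) (fun z => taud z t2) (2 * Sigma)
       ltac:(lra) (fun y => Hd y t2) (fun a b => Hl t2 a b) y1 y2) as HT.
    simpl in HT. destruct (H2 y1 t2 t1) as [Ha Hb].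
    set (E := tau y1 t2 - tau y2 t2 - taud y2 t2 * (y1 - y2)) in *.
    replace (tau y1 t1 - tau y1 t2) with
      ((tau y1 t1 - tau y2 t2 - taud y2 t2 * (y1 - y2)) - E) in Ha, Hb by (unfold E; ring).
    set (D := tau y1 t1 - tau y2 t2 - taud y2 t2 * (y1 - y2)) in *.
    assert (H : Rabs (D - E) <= Rabs D + Rabs E) by
      (unfold Rminus; rewrite <- (Rabs_Ropp E); apply Rabs_triang).
    pose proof (Rabs_triang (D - E) E). replace (D - E + E) with D in H0 by ring.
    split; lra.
Qed.

Theorem proposition7p5 :
  forall eta Sigma theta : R, 0 < eta -> 0 < Sigma -> 0 < theta ->
  exists L C : R, 0 < L /\ 0 < C /\
  forall tau taud : R -> R -> R,
    (forall y t, derivable_pt_lim (fun z => tau z t) y (taud y t)) ->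
    (forall t y1 y2, Rabs (taud y2 t - taud y1 t) <= 2 * Sigma * Rabs (y2 - y1)) ->
    (forall y t1 t2, theta * Rabs (t2 - t1) <= Rabs (tau y t2 - tau y t1) /\
                     Rabs (tau y t2 - tau y t1) <= / theta * Rabs (t2 - t1)) ->
    (forall y t1 t2, Rabs (taud y t2 - taud y t1) <= eta * sqrt (Rabs (t2 - t1))) ->
    (forall w, inW w -> exists v, phi_rel tau taud w v /\ inL v /\
        forall v', phi_rel tau taud w v' -> v' = v) /\
    intrinsic_Lipschitz_graph (Gamma tau taud) L /\
    (forall a, Gamma tau taud (Psi tau taud a)) /\
    (forall p, Gamma tau taud p -> exists a, Psi tau taud a = p) /\
    (forall a b, / C * dpar a b <= hdist (Psi tau taud a) (Psi tau taud b) /\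
                 hdist (Psi tau taud a) (Psi tau taud b) <= C * dpar a b).
Proof.
  intros eta Sigma theta He HS Hth.
  set (k1 := sqrt ((1 + 2 * Sigma) / theta)).
  assert (Hk1 : 0 <= k1) by apply sqrt_pos.
  set (K := 2 * Sigma + eta).
  set (C := 1 + 2 * K + / theta + 2 * Sigma + (2 + 2 * Sigma) / theta).
  assert (Hit : 0 < / theta) by (apply Rinv_0_lt_compat; lra).
  assert (Hq : 0 < (2 + 2 * Sigma) / theta) by (unfold Rdiv; apply Rmult_lt_0_compat; lra).
  assert (HC1 : 1 <= C) by (unfold C, K; lra).
  assert (HCsq : forall X, X <= C -> X <= C ^ 2) by (intros; nra).
  exists (2 * Sigma + eta * k1), C.
  split; [nra|]. split; [lra|].
  intros tau taud Hd Hl H2 H3.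
  pose proof (core eta Sigma theta tau taud He HS Hth Hd Hl H2 H3) as Hc.
  assert (Hsurj : forall y s, exists t, tau y t = s).
  { intros y. apply (surj_aux (fun t => tau y t) theta Hth). intros a b. apply H2. }
  assert (Hinj : forall y t1 t2, tau y t1 = tau y t2 -> t1 = t2).
  { intros y t1 t2 He'. destruct (H2 y t1 t2) as [Ha _]. rewrite He' in Ha.
    replace (tau y t2 - tau y t2) with 0 in Ha by ring. rewrite Rabs_R0 in Ha.
    pose proof (Rabs_pos (t2 - t1)).
    destruct (Req_dec t1 t2) as [|Hn]; [auto|]. exfalso.
    assert (t2 - t1 <> 0) by lra. apply Rabs_no_R0 in H0. nra. }
  split.
  {
    intros w Hw. destruct (Hsurj (hy w) (ht w)) as [t Ht].
    exists (taud (hy w) t, 0, 0). split; [split; [exact Hw| exists t; split; auto]|].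
    split; [split; reflexivity|].
    intros v' [_ [t' [Ht' Hv']]]. rewrite Hv'.
    assert (t' = t) by (apply (Hinj (hy w)); congruence). subst. reflexivity. }
  split.
  {
    split; [intros; reflexivity|].
    split.
    { intros w Hw. destruct (Hsurj (hy w) (ht w)) as [t Ht].
      exists (Psi tau taud (hy w, t)). split; [apply Gamma_Psi|].
      rewrite PiW_Psi. destruct w as [[x y] s]. unfold inW, hx, hy, ht in *; simpl in *.
      subst. reflexivity. }
    split.
    { intros p q Hp Hq'. destruct (Gamma_inv _ _ _ Hp) as [[y1 t1] ->].
      destruct (Gamma_inv _ _ _ Hq') as [[y2 t2] ->].
      rewrite !PiW_Psi. intros He'. injection He' as Hy Ht. subst y2.
      apply Hinj in Ht. subst. reflexivity. }
    intros p q Hp Hq'. destruct (Gamma_inv _ _ _ Hp) as [[y1 t1] ->].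
    destruct (Gamma_inv _ _ _ Hq') as [[y2 t2] ->].
    destruct (z_comp tau taud y1 t1 y2 t2) as [Zx [Zy Zt]].
    set (z := hmul (hinv (Psi tau taud (y2, t2))) (Psi tau taud (y1, t1))) in *.
    destruct (Hc y1 t1 y2 t2) as [F1 [F2 F3]].
    set (D := tau y1 t1 - tau y2 t2 - taud y2 t2 * (y1 - y2)) in *.
    destruct (hnorm_lower (PiW z)) as [N0 [_ [Ny Nt]]].
    set (N := hnorm (PiW z)) in *.
    assert (EY : hy (PiW z) = y1 - y2) by (change (hy (PiW z)) with (hy z); exact Zy).
    assert (ET : ht (PiW z) = D).
    { change (ht (PiW z)) with (ht z + / 2 * hx z * hy z). rewrite Zt, Zx, Zy. unfold D. field. }
    rewrite EY in Ny. rewrite ET in Nt.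
    assert (Hy2 : (y1 - y2) ^ 2 <= N ^ 2) by (apply abs_sq; exact Ny).
    assert (Ht1 : Rabs (t1 - t2) <= (1 + 2 * Sigma) / theta * N ^ 2).
    { replace ((1 + 2 * Sigma) / theta * N ^ 2) with (((1 + 2 * Sigma) * N ^ 2) / theta)
        by (field; lra).
      apply div_le; [exact Hth|]. nra. }
    assert (Hs : sqrt (Rabs (t1 - t2)) <= k1 * N).
    { apply sqrt_bound; [|exact N0|exact Ht1].
      unfold Rdiv; apply Rmult_le_pos; lra. }
    assert (Ha : Rabs (hx z) <= (2 * Sigma + eta * k1) * N).
    { rewrite Zx. pose proof (Rabs_pos (y1 - y2)). nra. }
    apply hnorm_upper.
    - apply Rmult_le_pos; [nra|exact N0].
    - change (hx (PiL z)) with (hx z). change (hy (PiL z)) with 0.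
      replace (hx z ^ 2 + 0 ^ 2) with (hx z ^ 2) by ring. apply abs_sq. exact Ha.
    - change (ht (PiL z)) with 0. rewrite Rabs_R0. apply pow2_ge_0. }
  split; [apply Gamma_Psi|].
  split.
  { intros p Hp. destruct (Gamma_inv _ _ _ Hp) as [a ->]. now exists a. }
  intros [y1 t1] [y2 t2].
  unfold hdist.
  destruct (z_comp tau taud y1 t1 y2 t2) as [Zx [Zy Zt]].
  set (z := hmul (hinv (Psi tau taud (y2, t2))) (Psi tau taud (y1, t1))) in *.
  destruct (Hc y1 t1 y2 t2) as [F1 [F2 F3]].
  set (D := tau y1 t1 - tau y2 t2 - taud y2 t2 * (y1 - y2)) in *.
  set (Da := taud y1 t1 - taud y2 t2) in *.
  destruct (abs_half D Da (y1 - y2)) as [AH1 AH2].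
  assert (Hup : hnorm z <= C * dpar (y1, t1) (y2, t2)).
  { destruct (dpar_lower y1 t1 y2 t2) as [N0 [Ny [Ns Nt]]].
    set (N := dpar (y1, t1) (y2, t2)) in *.
    assert (HDa : Rabs Da <= K * N) by (unfold K; nra).
    assert (Hy2 : (y1 - y2) ^ 2 <= N ^ 2) by (apply abs_sq; exact Ny).
    assert (HDa2 : Da ^ 2 <= (K * N) ^ 2) by (apply abs_sq; exact HDa).
    assert (HK : 0 <= K) by (unfold K; lra).
    assert (Hprod : Rabs Da * Rabs (y1 - y2) <= K * N * N).
    { pose proof (Rabs_pos Da). pose proof (Rabs_pos (y1 - y2)).
      apply Rmult_le_compat; auto. }
    assert (HC2 : / theta + 2 * Sigma + / 2 * K <= C ^ 2) by (apply HCsq; unfold C; lra).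
    assert (HC3 : K ^ 2 + 1 <= C ^ 2) by (unfold C; nra).
    apply hnorm_upper.
    - nra.
    - rewrite Zx, Zy. fold Da. nra.
    - rewrite Zt. fold Da. nra. }
  assert (Hlo : dpar (y1, t1) (y2, t2) <= C * hnorm z).
  { destruct (hnorm_lower z) as [H0 [Hx [Hy Ht]]].
    set (H := hnorm z) in *.
    rewrite Zx in Hx. fold Da in Hx. rewrite Zy in Hy. rewrite Zt in Ht. fold Da in Ht.
    assert (Hy2 : (y1 - y2) ^ 2 <= H ^ 2) by (apply abs_sq; exact Hy).
    assert (Hprod : Rabs Da * Rabs (y1 - y2) <= H * H).
    { pose proof (Rabs_pos Da). pose proof (Rabs_pos (y1 - y2)).
      apply Rmult_le_compat; auto. }
    replace D with ((D - / 2 * Da * (y1 - y2)) + / 2 * Da * (y1 - y2)) in F2 by ring.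
    destruct (abs_half (D - / 2 * Da * (y1 - y2)) Da (y1 - y2)) as [_ AH3].
    assert (Ht1 : Rabs (t1 - t2) <= (2 + 2 * Sigma) / theta * H ^ 2).
    { replace ((2 + 2 * Sigma) / theta * H ^ 2) with (((2 + 2 * Sigma) * H ^ 2) / theta)
        by (field; lra).
      apply div_le; [exact Hth|]. nra. }
    assert (HC2 : (2 + 2 * Sigma) / theta <= C ^ 2) by (apply HCsq; unfold C, K; lra).
    apply dpar_upper.
    - nra.
    - nra.
    - nra. }
  split.
  - apply Rmult_le_reg_l with C; [lra|]. rewrite <- Rmult_assoc, Rinv_r by lra. lra.
  - exact Hup.
Qed.
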